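(* Assume hypothesis (H), extend $g$ to a bounded $C^1$ function on $\mathbb{R}$, and assume $g'(K)\,h\,e^{h+1}<-1$. Then for all sufficiently small $\varepsilon>0$, every non-constant bounded solution $x:\mathbb{R}\to\mathbb{R}$ of $$\varepsilon^2x''(t)-x'(t)-x(t)+g(x(t-h))=0,\qquad t\in\mathbb{R},$$ with $x(+\infty)=K$ oscillates about $K$, i.e. for every $z\in\mathbb{R}$ the function $x-K$ takes both positive and negative values on $[z,+\infty)$.
   Context: Hypothesis (H): for $h>0$ and $g:\mathbb{R}_+\to\mathbb{R}_+$, the equation $u'(t)=-u(t)+g(u(t-h))$, $u\ge0$, has exactly two constant solutions $0$ and $K>0$; $K$ is exponentially asymptotically stable and $0$ is hyperbolic; $g\in C^1(\mathbb{R}_+,\mathbb{R}_+)$, $g$ is $C^2$ near $0$ and near $K$, and $p:=g'(0)>1$. *)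

(* Defs.v *)
From Stdlib Require Import Reals.
From Coquelicot Require Import Coquelicot.
Open Scope R_scope.

Definition C1_R (f : R -> R) : Prop :=
  forall x, ex_derive f x /\ continuous (Derive f) x.

Definition C2_on_ball (f : R -> R) (a d : R) : Prop :=
  forall x, a - d < x < a + d ->
    ex_derive f x /\ ex_derive (Derive f) x /\ continuous (Derive_n f 2) x.

Definition C2_near_0_on_Rplus (g : R -> R) : Prop :=
  exists d, 0 < d /\ exists G : R -> R,
    C2_on_ball G 0 d /\ (forall x, 0 <= x < d -> G x = g x).

Definition C2_near (g : R -> R) (a : R) : Prop :=
  exists d, 0 < d /\ C2_on_ball g a d.

(* u is a solution on [0, +oo) of u'(t) = -u(t) + g(u(t-h)) with continuous
   history on [-h, 0] (values of u before -h are irrelevant; requiring global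
   continuity loses nothing since any continuous history extends). *)
Definition dde_solution (g : R -> R) (h : R) (u : R -> R) : Prop :=
  (forall t, continuous u t) /\
  (forall t, 0 < t -> is_derive u t (- u t + g (u (t - h)))).

Definition exp_asympt_stable (g : R -> R) (h K : R) : Prop :=
  exists delta M gamma, 0 < delta /\ 0 < M /\ 0 < gamma /\
    forall u, dde_solution g h u ->
    forall r, 0 <= r < delta ->
      (forall s, -h <= s <= 0 -> Rabs (u s - K) <= r) ->
      forall t, 0 <= t -> Rabs (u t - K) <= M * exp (- gamma * t) * r.

(* The equilibrium 0 is hyperbolic: the characteristic equation
   lambda = -1 + g'(0) e^{-lambda h} has no purely imaginary root i*w
   (real and imaginary parts written out). *)
Definition hyperbolic_at_0 (g : R -> R) (h : R) : Prop :=
  ~ exists w : R,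
      -1 + Derive g 0 * cos (w * h) = 0 /\ w = - (Derive g 0) * sin (w * h).

Definition hyp_H (g : R -> R) (h K : R) : Prop :=
  0 < h /\ 0 < K /\
  (forall u, 0 <= u -> 0 <= g u) /\
  (forall u, 0 <= u -> (g u = u <-> (u = 0 \/ u = K))) /\
  exp_asympt_stable g h K /\
  hyperbolic_at_0 g h /\
  C1_R g /\
  C2_near_0_on_Rplus g /\ C2_near g K /\
  1 < Derive g 0.

Definition sp_solution (g : R -> R) (h eps : R) (x : R -> R) : Prop :=
  forall t, ex_derive x t /\ ex_derive (Derive x) t /\
    eps ^ 2 * Derive_n x 2 t - Derive x t - x t + g (x (t - h)) = 0.

(* Main.v *)
Require Import Defs.
From Stdlib Require Import Reals Lra Classical.
From Coquelicot Require Import Coquelicot.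
Open Scope R_scope.


Lemma mono_nonincr (f df : R -> R) a b : a <= b ->
  (forall t, a <= t <= b -> is_derive f t (df t)) ->
  (forall t, a <= t <= b -> df t <= 0) -> f b <= f a.
Proof.
  intros Hab Hd Hn.
  destruct (MVT_gen f a b df) as [c [Hc Heq]].
  - intros x Hx. apply Hd. rewrite Rmin_left in Hx by lra. rewrite Rmax_right in Hx by lra. lra.
  - intros x Hx. rewrite Rmin_left in Hx by lra. rewrite Rmax_right in Hx by lra.
    apply continuity_pt_filterlim. apply (ex_derive_continuous (K:=R_AbsRing) (V:=R_NormedModule)). eexists. apply Hd. lra.
  - rewrite Rmin_left in Hc by lra. rewrite Rmax_right in Hc by lra.
    assert (df c * (b - a) <= 0). { apply Rmult_le_0_r. apply Hn; lra. lra. }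
    lra.
Qed.

Lemma mono_nondecr (f df : R -> R) a b : a <= b ->
  (forall t, a <= t <= b -> is_derive f t (df t)) ->
  (forall t, a <= t <= b -> 0 <= df t) -> f a <= f b.
Proof.
  intros Hab Hd Hn.
  assert (- f b <= - f a); [|lra].
  apply (mono_nonincr (fun t => - f t) (fun t => - df t)); auto.
  - intros t Ht. apply (is_derive_opp f). now apply Hd.
  - intros t Ht. specialize (Hn t Ht). lra.
Qed.

Lemma ball_R (x e y : R) : ball x e y <-> Rabs (y - x) < e.
Proof. reflexivity. Qed.

Lemma isd_plus (f g : R -> R) x a b : is_derive f x a -> is_derive g x b ->
  is_derive (fun y => f y + g y) x (a + b).
Proof. intros; now apply (is_derive_plus f g). Qed.
Lemma isd_minus (f g : R -> R) x a b : is_derive f x a -> is_derive g x b ->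
  is_derive (fun y => f y - g y) x (a - b).
Proof. intros; now apply (is_derive_minus f g). Qed.
Lemma isd_mult (f g : R -> R) x a b : is_derive f x a -> is_derive g x b ->
  is_derive (fun y => f y * g y) x (a * g x + f x * b).
Proof. intros; apply (is_derive_mult f g); auto. intros; apply Rmult_comm. Qed.
Lemma isd_scal (f : R -> R) c x a : is_derive f x a -> is_derive (fun y => c * f y) x (c * a).
Proof. intros; now apply (is_derive_scal f). Qed.
Lemma isd_ext (f : R -> R) x a b : is_derive f x a -> a = b -> is_derive f x b.
Proof. intros H ->; exact H. Qed.
Lemma isd_exp c x : is_derive (fun s => exp (c * s)) x (c * exp (c * x)).
Proof. auto_derive; auto; ring. Qed.
Lemma isd_lin c x : is_derive (fun s => c * s) x c.
Proof. auto_derive; auto; ring. Qed.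
Lemma isd_const c x : is_derive (fun _ : R => c) x 0.
Proof. auto_derive; auto. Qed.
Lemma isd_id x : is_derive (fun s : R => s) x 1.
Proof. auto_derive; auto. Qed.
Lemma isd_opp (f : R -> R) x a : is_derive f x a -> is_derive (fun y => - f y) x (- a).
Proof. intros; now apply (is_derive_opp f). Qed.

Lemma exp_ge_e_x x : exp 1 * x <= exp x.
Proof.
  replace (exp x) with (exp 1 * exp (x - 1)) by (rewrite <- exp_plus; f_equal; ring).
  pose proof (exp_ineq1_le (x-1)). pose proof (exp_pos 1). nra.
Qed.

Lemma bernoulli k n : 1 <= k -> 1 + INR n * (k - 1) <= k ^ n.
Proof.
  intros Hk. induction n.
  - simpl. lra.
  - rewrite S_INR. simpl. assert (0 <= INR n) by apply pos_INR.
    assert (0 <= (k-1)*(k^n - 1)) by (apply Rmult_le_pos; nra). nra.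
Qed.

Lemma osc (v dv : R -> R) (p hh T1 : R) : 0 < hh -> 0 < p -> 1 < exp 1 * p * hh ->
  (forall s, T1 - hh <= s -> is_derive v s (dv s)) ->
  (forall s, T1 - hh <= s -> 0 < v s) ->
  (forall s, T1 - hh <= s -> dv s <= 0) ->
  (forall t, T1 <= t -> dv t <= - p * v (t - hh)) -> False.
Proof.
  intros Hh Hp Hk Hd Hv Hdv Hdel.
  assert (Hmono : forall a b, T1 - hh <= a -> a <= b -> v b <= v a).
  { intros a b Ha Hab. apply (mono_nonincr v dv a b Hab).
    - intros t Ht; apply Hd; lra.
    - intros t Ht; apply Hdv; lra. }
  assert (HW : forall t, T1 + hh/2 <= t -> p * (hh/2) * v (t - hh) <= v (t - hh/2)).
  { intros t Ht.
    assert (H := mono_nonincr (fun s => v s + p * v (t - hh) * s)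
                   (fun s => dv s + p * v (t - hh)) (t - hh/2) t ltac:(lra)).
    simpl in H.
    assert (v t + p * v (t - hh) * t <= v (t - hh / 2) + p * v (t - hh) * (t - hh / 2)).
    { apply H.
      - intros s Hs. apply isd_plus. apply Hd; lra. apply isd_lin.
      - intros s Hs. pose proof (Hdel s ltac:(lra)).
        pose proof (Hmono (s - hh) (t - hh) ltac:(lra) ltac:(lra)). nra. }
    pose proof (Hv t ltac:(lra)). nra. }
  set (m0 := p * (hh / 2)).
  assert (Hm0 : 0 < m0) by (unfold m0; apply Rmult_lt_0_compat; lra).
  assert (HM : forall t, T1 + hh <= t -> m0 * m0 * v (t - hh) <= v t).
  { intros t Ht. pose proof (HW t ltac:(lra)) as W1.
    pose proof (HW (t + hh/2) ltac:(lra)) as W2.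
    replace (t + hh / 2 - hh) with (t - hh/2) in W2 by field.
    replace (t + hh / 2 - hh/2) with t in W2 by field.
    fold m0 in W1, W2. nra. }
  set (k := exp 1 * p * hh).
  assert (HI : forall n, forall t, T1 + INR n * hh <= t -> k ^ n * v t <= v (t - hh)).
  { induction n.
    - intros t Ht. simpl in Ht. simpl. rewrite Rmult_1_l. apply Hmono; lra.
    - intros t Ht. rewrite S_INR in Ht. assert (0 <= INR n * hh) by (apply Rmult_le_pos; [apply pos_INR|lra]).
      set (c := k ^ n).
      assert (Hc : 0 < c) by (unfold c; apply pow_lt; unfold k; pose proof (exp_pos 1); nra).
      assert (Hom := mono_nonincr (fun s => v s * exp (p * c * s))
         (fun s => dv s * exp (p * c * s) + v s * (p * c * exp (p * c * s))) (t - hh) t ltac:(lra)).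
      simpl in Hom.
      assert (Hx : v t * exp (p * c * t) <= v (t - hh) * exp (p * c * (t - hh))).
      { apply Hom.
        - intros s Hs. apply (isd_mult v (fun s => exp (p*c*s)) s (dv s) (p*c*exp (p*c*s))). apply Hd; lra. apply (isd_exp (p*c) s).
        - intros s Hs. pose proof (IHn s ltac:(lra)) as Hi. fold c in Hi.
          pose proof (Hdel s ltac:(lra)) as Hq. assert (p * (c * v s) <= p * v (s - hh)) by (apply Rmult_le_compat_l; lra). pose proof (exp_pos (p * c * s)). assert (dv s + p * c * v s <= 0) by nra. replace (dv s * exp (p * c * s) + v s * (p * c * exp (p * c * s))) with ((dv s + p * c * v s) * exp (p * c * s)) by ring. nra. }
      replace (exp (p * c * t)) with (exp (p * c * (t - hh)) * exp (p * c * hh)) in Hx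
        by (rewrite <- exp_plus; f_equal; ring).
      pose proof (exp_pos (p * c * (t - hh))).
      assert (v t * exp (p * c * hh) <= v (t - hh)). { apply Rmult_le_reg_r with (exp (p * c * (t - hh))); [lra|]. rewrite Rmult_assoc, (Rmult_comm (exp (p*c*hh))). exact Hx. }
      pose proof (exp_ge_e_x (p * c * hh)).
      pose proof (Hv t ltac:(pose proof (pos_INR n); nra)).
      simpl. fold c. unfold k. nra. }
  assert (Hk1 : 1 <= k) by (unfold k; lra).
  destruct (INR_unbounded (1 / (m0 * m0) / (k - 1))) as [n Hn].
  pose proof (bernoulli k n Hk1).
  assert (HK : 1 / (m0 * m0) < k ^ n).
  { assert (INR n * (k - 1) > 1 / (m0 * m0)).
    { apply (Rmult_lt_compat_r (k-1)) in Hn; [|unfold k; lra].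
      replace (1 / (m0 * m0) / (k - 1) * (k - 1)) with (1 / (m0 * m0)) in Hn by (field; repeat split; unfold k in *; nra). lra. }
    lra. }
  set (t := T1 + INR n * hh + hh).
  pose proof (pos_INR n).
  pose proof (HI n t ltac:(unfold t; lra)).
  pose proof (HM t ltac:(unfold t; nra)).
  pose proof (Hv t ltac:(unfold t; nra)).
  assert (m0 * m0 * k ^ n <= 1).
  { assert (m0 * m0 * k ^ n * v t <= 1 * v t) by nra.
    apply Rmult_le_reg_r with (v t); lra. }
  apply (Rmult_lt_compat_l (m0 * m0)) in HK; [|nra].
  field_simplify in HK; [|lra]. lra.
Qed.

Lemma core (e lp lm A' h tau T B : R) (y y1 y2 : R -> R) :
  0 < e -> 0 < lp -> lm <= 0 -> e * (lp + lm) = 1 -> e * lp * lm = -1 ->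
  0 < A' -> 0 < tau < h ->
  1 < exp 1 * (A' * (1 - exp (- lp * tau)) / (e * lp) * exp (- lm * (h - tau))) * (h - tau) ->
  (forall t, is_derive y t (y1 t)) -> (forall t, is_derive y1 t (y2 t)) ->
  (forall t, T - h <= t -> 0 <= y t) ->
  (forall t, T <= t -> A' * y (t - h) <= e * y2 t - y1 t - y t) ->
  (forall t, Rabs (y t) <= B) ->
  (forall t1, exists t, t1 <= t /\ y t <> 0) -> False.
Proof.
  intros He Hlp Hlm Hsum Hprod HA Htau Hp Hd1 Hd2 Hpos HF HB Hnz.
  set (u := fun s => y1 s - lm * y s).
  set (F := fun s => e * y2 s - y1 s - y s).
  assert (HFpos : forall s, T <= s -> 0 <= F s).
  { intros s Hs. pose proof (HF s Hs). pose proof (Hpos (s - h) ltac:(lra)). unfold F. nra. }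
  assert (Hphi : forall s, is_derive (fun s => exp (- lp * s) * u s) s (exp (- lp * s) * F s / e)).
  { intros s. eapply isd_ext.
    apply (isd_mult (fun s => exp (- lp * s)) u s (- lp * exp (- lp * s)) (y2 s - lm * y1 s)).
    apply isd_exp. apply isd_minus. apply Hd2. apply isd_scal. apply Hd1.
    apply Rmult_eq_reg_l with e; [|lra].
    replace (e * (exp (- lp * s) * F s / e)) with (exp (- lp * s) * F s) by (field; lra).
    unfold u, F.
    replace (e * (- lp * exp (- lp * s) * (y1 s - lm * y s) + exp (- lp * s) * (y2 s - lm * y1 s)))
      with (exp (- lp * s) * (e * y2 s - (e * (lp + lm)) * y1 s + (e * lp * lm) * y s)) by ring.
    rewrite Hsum, Hprod. ring. }
  assert (Hphimono : forall a b, T <= a -> a <= b -> exp (- lp * a) * u a <= exp (- lp * b) * u b).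
  { intros a b Ha Hab. apply (mono_nondecr _ _ a b Hab (fun t _ => Hphi t)).
    intros t Ht. pose proof (HFpos t ltac:(lra)). pose proof (exp_pos (- lp * t)).
    unfold Rdiv. apply Rmult_le_pos; [nra|]. left; apply Rinv_0_lt_compat; lra. }
  assert (HB0 : 0 <= B) by (pose proof (HB 0); pose proof (Rabs_pos (y 0)); lra).
  assert (Hu : forall t, T <= t -> u t <= 0).
  { intros t0 Ht0. destruct (Rle_lt_dec (u t0) 0) as [|HU]; [auto|exfalso].
    set (U := u t0) in *.
    assert (Hgrow : forall s, t0 <= s -> U * lp * (s - t0) <= u s).
    { intros s Hs. pose proof (Hphimono t0 s Ht0 Hs) as Hm.
      assert (exp (lp * (s - t0)) * U <= u s).
      { apply Rmult_le_reg_l with (exp (- lp * s)). apply exp_pos.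
        replace (exp (- lp * s) * (exp (lp * (s - t0)) * U)) with (exp (- lp * t0) * U).
        exact Hm. rewrite <- Rmult_assoc, <- exp_plus. f_equal. f_equal. ring. }
      pose proof (exp_ineq1_le (lp * (s - t0))). nra. }
    set (s1 := t0 + (1 - lm * B) / (U * lp)).
    assert (Hs1 : t0 <= s1).
    { unfold s1. assert (0 <= (1 - lm * B) / (U * lp)); [|lra].
      unfold Rdiv. apply Rmult_le_pos. nra. left. apply Rinv_0_lt_compat. nra. }
    assert (Hy1 : forall s, s1 <= s -> 1 <= y1 s).
    { intros s Hs. pose proof (Hgrow s ltac:(lra)).
      assert (1 - lm * B <= U * lp * (s - t0)).
      { assert (U * lp * (s1 - t0) = 1 - lm * B) by (unfold s1; field; nra).
        assert (0 < U * lp) by nra. nra. }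
      pose proof (HB s) as Hb. apply Rabs_le_between in Hb.
      assert (lm * B <= lm * y s) by nra.
      unfold u in *. lra. }
    assert (Hm := mono_nondecr (fun s => y s - s) (fun s => y1 s - 1) s1 (s1 + 2 * B + 1) ltac:(lra)).
    simpl in Hm.
    assert (y s1 - s1 <= y (s1 + 2 * B + 1) - (s1 + 2 * B + 1)).
    { apply Hm. intros t _. apply isd_minus. apply Hd1. 
      apply isd_id.
      intros t Ht. pose proof (Hy1 t ltac:(lra)). lra. }
    pose proof (HB s1) as Hb1. apply Rabs_le_between in Hb1.
    pose proof (HB (s1 + 2 * B + 1)) as Hb2. apply Rabs_le_between in Hb2. lra. }
  assert (Hdec : forall a b, T <= a -> a <= b -> y b <= y a).
  { intros a b Ha Hab. apply (mono_nonincr y y1 a b Hab (fun t _ => Hd1 t)).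
    intros t Ht. pose proof (Hu t ltac:(lra)). pose proof (Hpos t ltac:(lra)).
    unfold u in *. nra. }
  assert (Hypos : forall t, T <= t -> 0 < y t).
  { intros t Ht. destruct (Rle_lt_dec (y t) 0) as [H0|]; [exfalso|auto].
    destruct (Hnz t) as [t' [Ht' Hne]]. apply Hne.
    pose proof (Hdec t t' Ht Ht'). pose proof (Hpos t' ltac:(lra)). lra. }
  set (Q := A' * (1 - exp (- lp * tau)) / (e * lp)).
  assert (HuQ : forall t, T + h <= t -> u t <= - Q * y (t + tau - h)).
  { intros t Ht. set (c := A' * y (t + tau - h) / e).
    assert (Hc : 0 <= c).
    { unfold c. pose proof (Hpos (t + tau - h) ltac:(lra)). unfold Rdiv.
      apply Rmult_le_pos; [nra|]. left; apply Rinv_0_lt_compat; lra. }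
    assert (Hpsi := mono_nondecr (fun s => exp (- lp * s) * u s + c * exp (- lp * s) / lp)
      (fun s => exp (- lp * s) * F s / e + c * (- lp * exp (- lp * s)) / lp) t (t + tau) ltac:(lra)).
    simpl in Hpsi.
    assert (Hx : exp (- lp * t) * u t + c * exp (- lp * t) / lp <=
                 exp (- lp * (t + tau)) * u (t + tau) + c * exp (- lp * (t + tau)) / lp).
    { apply Hpsi.
      - intros s _. apply isd_plus. apply Hphi.
        auto_derive; [auto | field; lra].
      - intros s Hs.
        assert (A' * y (t + tau - h) <= A' * y (s - h)).
        { apply Rmult_le_compat_l; [lra|]. apply Hdec; lra. }
        pose proof (HF s ltac:(lra)). fold (F s) in H0.
        assert (c <= F s / e).
        { unfold c. unfold Rdiv. apply Rmult_le_compat_r. left; apply Rinv_0_lt_compat; lra. lra. }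
        replace (exp (- lp * s) * F s / e + c * (- lp * exp (- lp * s)) / lp)
          with (exp (- lp * s) * (F s / e - c)) by (field; lra).
        apply Rmult_le_pos. left; apply exp_pos. lra. }
    pose proof (Hu (t + tau) ltac:(lra)).
    replace (exp (- lp * (t + tau))) with (exp (- lp * t) * exp (- lp * tau)) in Hx
      by (rewrite <- exp_plus; f_equal; ring).
    pose proof (exp_pos (- lp * t)). pose proof (exp_pos (- lp * tau)).
    assert (exp (- lp * t) * (u t + c / lp * (1 - exp (- lp * tau))) <= 0).
    { assert (exp (- lp * t) * exp (- lp * tau) * u (t + tau) <= 0).
      { apply Rmult_le_0_l; [|lra]. left; apply Rmult_lt_0_compat; lra. }
      replace (exp (- lp * t) * (u t + c / lp * (1 - exp (- lp * tau))))
        with (exp (- lp * t) * u t + c * exp (- lp * t) / lp -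
              c * (exp (- lp * t) * exp (- lp * tau)) / lp) by (field; lra).
      lra. }
    assert (u t + c / lp * (1 - exp (- lp * tau)) <= 0).
    { destruct (Rle_lt_dec (u t + c / lp * (1 - exp (- lp * tau))) 0); auto.
      exfalso. assert (0 < exp (- lp * t) * (u t + c / lp * (1 - exp (- lp * tau)))) by
        (apply Rmult_lt_0_compat; lra). lra. }
    replace (- Q * y (t + tau - h)) with (- (c / lp * (1 - exp (- lp * tau)))).
    lra. unfold Q, c. field. lra. }
  set (hh := h - tau).
  set (p := Q * exp (- lm * hh)).
  assert (Hpp : 0 < p).
  { destruct (Rle_lt_dec p 0); auto. exfalso. pose proof (exp_pos 1).
    fold Q hh p in Hp. assert (exp 1 * p * hh <= 0).
    { assert (0 < hh) by (unfold hh; lra).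
      assert (exp 1 * p <= 0) by nra. nra. }
    lra. }
  apply (osc (fun s => exp (- lm * s) * y s) (fun s => exp (- lm * s) * u s) p hh (T + h)).
  - unfold hh; lra.
  - exact Hpp.
  - exact Hp.
  - intros s _. eapply isd_ext.
    apply (isd_mult (fun s => exp (- lm * s)) y s (- lm * exp (- lm * s)) (y1 s)).
    apply (isd_exp (- lm) s). apply Hd1. unfold u. change (- lm * exp (- lm * s) * y s + exp (- lm * s) * y1 s = exp (- lm * s) * (y1 s - lm * y s)). ring.
  - intros s Hs. apply Rmult_lt_0_compat. apply exp_pos. apply Hypos. unfold hh in Hs. lra.
  - intros s Hs. apply Rmult_le_0_l. left; apply exp_pos. apply Hu. unfold hh in Hs. lra.
  - intros t Ht. pose proof (HuQ t Ht).
    replace (t + tau - h) with (t - hh) in H by (unfold hh; ring).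
    replace (exp (- lm * t)) with (exp (- lm * hh) * exp (- lm * (t - hh)))
      by (rewrite <- exp_plus; f_equal; ring).
    pose proof (exp_pos (- lm * hh)). pose proof (exp_pos (- lm * (t - hh))).
    unfold p.
    replace (- (Q * exp (- lm * hh)) * (exp (- lm * (t - hh)) * y (t - hh)))
      with (exp (- lm * hh) * exp (- lm * (t - hh)) * (- Q * y (t - hh))) by ring.
    apply Rmult_le_compat_l. left; apply Rmult_lt_0_compat; lra. exact H.
Qed.

Definition sq (e : R) := sqrt (1 + 4 * e).
Definition lpf (e : R) := (1 + sq e) / (2 * e).
Definition lmf (e : R) := (1 - sq e) / (2 * e).

Lemma sq_facts e : 0 < e -> sq e * sq e = 1 + 4 * e /\ 1 <= sq e /\ sq e <= 1 + 2 * e.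
Proof.
  intros He. unfold sq. pose proof (sqrt_sqrt (1 + 4 * e) ltac:(lra)).
  pose proof (sqrt_pos (1 + 4 * e)).
  split; auto. split; nra.
Qed.

Lemma root_facts e : 0 < e ->
  0 < lpf e /\ lmf e <= 0 /\ e * (lpf e + lmf e) = 1 /\ e * lpf e * lmf e = -1.
Proof.
  intros He. destruct (sq_facts e He) as [H1 [H2 H3]]. unfold lpf, lmf.
  split; [|split; [|split]].
  - unfold Rdiv. apply Rmult_lt_0_compat. lra. apply Rinv_0_lt_compat. lra.
  - unfold Rdiv. assert (0 < / (2 * e)) by (apply Rinv_0_lt_compat; lra). nra.
  - field. lra.
  - apply (Rmult_eq_reg_r (4 * e)); [|lra]. field_simplify; [|lra]. replace (sq e ^ 2) with (sq e * sq e) by ring. rewrite H1. try field; try lra.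
Qed.

Lemma exp_le_exp' x y : x <= y -> exp x <= exp y.
Proof. intros [H|H]. left; now apply exp_increasing. subst; lra. Qed.

Lemma prod5 a x1 x2 x3 x4 x5 : 0 <= a -> a <= x1 -> a <= x2 -> a <= x3 -> a <= x4 -> a <= x5 ->
  a * a * a * a * a <= x1 * x2 * x3 * x4 * x5.
Proof.
  intros. assert (0 <= a * a) by nra. assert (a * a <= x1 * x2) by nra.
  assert (0 <= a * a * a) by nra. assert (a * a * a <= x1 * x2 * x3) by nra.
  assert (0 <= a * a * a * a) by nra. assert (a * a * a * a <= x1 * x2 * x3 * x4) by nra.
  nra.
Qed.

Lemma params (A h : R) : 0 < A -> 0 < h -> 1 < A * h * exp (h + 1) ->
  exists r tau eps0, 0 < r < 1 /\ 0 < tau < h /\ 0 < eps0 /\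
  forall eps, 0 < eps < eps0 ->
    1 < exp 1 * (r * A * (1 - exp (- lpf (eps ^ 2) * tau)) / (eps ^ 2 * lpf (eps ^ 2))
                 * exp (- lmf (eps ^ 2) * (h - tau))) * (h - tau).
Proof.
  intros HA Hh Hk.
  set (k := A * h * exp (h + 1)) in *.
  set (d := (1 - 1 / k) / 10).
  assert (Hd : 0 < d < 1/10).
  { unfold d. assert (0 < 1 / k < 1). { split. apply Rdiv_lt_0_compat; lra.
      apply (Rmult_lt_reg_r k); [lra|]. field_simplify; lra. } lra. }
  set (tau := d * h / (2 * h + 2)).
  assert (Htau : 0 < tau <= d / 2 /\ tau <= d * h).
  { unfold tau. split; [split|].
    - apply Rdiv_lt_0_compat; nra.
    - apply (Rmult_le_reg_r (2 * h + 2)); [lra|]. field_simplify; nra.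
    - apply (Rmult_le_reg_r (2 * h + 2)); [lra|]. field_simplify; nra. }
  exists (1 - d), tau, (Rmin 1 (Rmin (d * tau) (d / (2 * h)))).
  split; [lra|]. split; [split; nra|]. split.
  { apply Rmin_pos; [lra|]. apply Rmin_pos; [nra|]. apply Rdiv_lt_0_compat; lra. }
  intros eps [He0 He1].
  pose proof (Rmin_l 1 (Rmin (d * tau) (d / (2 * h)))).
  pose proof (Rmin_r 1 (Rmin (d * tau) (d / (2 * h)))).
  pose proof (Rmin_l (d * tau) (d / (2 * h))).
  pose proof (Rmin_r (d * tau) (d / (2 * h))).
  set (e := eps ^ 2).
  assert (He : 0 < e /\ e < d * tau /\ e * h < d / 2).
  { unfold e. simpl. rewrite Rmult_1_r. split; [nra|]. split; [nra|].
    assert (eps * eps < d / (2 * h)) by nra.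
    apply (Rmult_lt_compat_r h) in H3; [|lra].
    replace (d / (2 * h) * h) with (d / 2) in H3 by (field; lra). lra. }
  destruct He as [He [Het Heh]].
  destruct (sq_facts e He) as [S1 [S2 S3]].
  destruct (root_facts e He) as [R1 [R2 [R3 R4]]].
  assert (F1 : 1 - d <= 1 - exp (- lpf e * tau)).
  { assert (lpf e >= 1 / e).
    { unfold lpf. apply Rle_ge. unfold Rdiv. rewrite Rinv_mult.
      assert (0 < / e) by (apply Rinv_0_lt_compat; lra).
      assert (/2 * 2 = 1) by field. nra. }
    assert (exp (- lpf e * tau) <= exp (- (tau / e))).
    { apply exp_le_exp'. unfold Rdiv. assert (/ e = 1 / e) by (field; lra). nra. }
    pose proof (exp_ineq1_le (tau / e)).
    assert (exp (- (tau / e)) * exp (tau / e) = 1) by (rewrite <- exp_plus; replace (- (tau/e) + tau/e) with 0 by ring; apply exp_0).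
    assert (exp (- (tau / e)) <= e / tau).
    { assert (0 < exp (- (tau / e))) by apply exp_pos.
      assert (exp (- (tau / e)) * (tau / e) <= 1) by nra.
      apply (Rmult_le_reg_r (tau / e)). apply Rdiv_lt_0_compat; lra.
      replace (e / tau * (tau / e)) with 1 by (field; lra). lra. }
    assert (e / tau <= d).
    { apply (Rmult_le_reg_r tau); [lra|]. replace (e / tau * tau) with e by (field; lra). lra. }
    lra. }
  assert (F2 : 1 - d <= 1 / (e * lpf e)).
  { replace (1 / (e * lpf e)) with (2 / (1 + sq e)) by (unfold lpf; field; lra).
    apply (Rmult_le_reg_r (1 + sq e)); [lra|].
    replace (2 / (1 + sq e) * (1 + sq e)) with 2 by (field; lra). nra. }
  assert (F3 : (1 - d) * exp h <= exp (- lmf e * (h - tau))).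
  { assert (1 - e <= - lmf e).
    { unfold lmf. replace (- ((1 - sq e) / (2 * e))) with ((sq e - 1) / (2 * e)) by (field; lra).
      apply (Rmult_le_reg_r (2 * e)); [lra|].
      replace ((sq e - 1) / (2 * e) * (2 * e)) with (sq e - 1) by (field; lra).
      assert (X : 1 + 2 * e - 2 * e * e <= sq e).
      { assert (e < 1) by nra.
        assert ((1 + 2 * e - 2 * e * e) * (1 + 2 * e - 2 * e * e) <= sq e * sq e).
        { rewrite S1. assert (0 <= e * e * e * (2 - e)) by (apply Rmult_le_pos; nra). nra. }
        nra. }
      nra. }
    assert (h - tau - e * h <= - lmf e * (h - tau)) by (assert (0 <= (- lmf e - (1 - e)) * (h - tau)) by (apply Rmult_le_pos; nra); assert (0 <= e * tau) by nra; nra).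
    assert (HX : exp (h - tau - e * h) <= exp (- lmf e * (h - tau))) by (apply exp_le_exp'; lra).
    replace (exp (h - tau - e * h)) with (exp h * exp (- (tau + e * h))) in HX
      by (rewrite <- exp_plus; f_equal; ring).
    pose proof (exp_ineq1_le (- (tau + e * h))). pose proof (exp_pos h). assert (1 - d <= exp (- (tau + e * h))) by lra. assert ((1 - d) * exp h <= exp (- (tau + e * h)) * exp h) by (apply Rmult_le_compat_r; lra). nra. }
  assert (F4 : (1 - d) * h <= h - tau) by lra.
  set (X1 := 1 - exp (- lpf e * tau)) in *.
  set (X2 := 1 / (e * lpf e)) in *.
  set (X3 := exp (- lmf e * (h - tau))) in *.
  replace (exp 1 * ((1 - d) * A * X1 / (e * lpf e) * X3) * (h - tau))
    with ((exp 1 * A) * ((1 - d) * X1 * X2 * X3 * (h - tau))) by (unfold X2; field; nra).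
  assert (P : (1 - d) * (1 - d) * (1 - d) * (1 - d) * (1 - d) * (exp h * h)
              <= (1 - d) * X1 * X2 * X3 * (h - tau)).
  { pose proof (exp_pos h).
    assert (Q := prod5 (1 - d) (1 - d) X1 X2 (X3 / exp h) ((h - tau) / h) ltac:(lra) ltac:(lra) F1 F2).
    assert (1 - d <= X3 / exp h).
    { apply (Rmult_le_reg_r (exp h)); [lra|]. replace (X3 / exp h * exp h) with X3 by (field; lra). lra. }
    assert (1 - d <= (h - tau) / h).
    { apply (Rmult_le_reg_r h); [lra|]. replace ((h - tau) / h * h) with (h - tau) by (field; lra). lra. }
    specialize (Q H4 H5).
    replace ((1 - d) * X1 * X2 * X3 * (h - tau)) with
      ((1 - d) * X1 * X2 * (X3 / exp h) * ((h - tau) / h) * (exp h * h)) by (field; lra).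
    apply Rmult_le_compat_r; [nra|]. exact Q. }
  assert (B5 : 1 - 5 * d <= (1 - d) * (1 - d) * (1 - d) * (1 - d) * (1 - d)).
  { assert (0 <= d * d) by nra. assert (0 <= d * d * d) by nra.
    assert (0 <= d * d * d * d) by nra. nra. }
  assert (Hkk : k = exp 1 * A * (exp h * h)).
  { unfold k. rewrite exp_plus. ring. }
  assert (0 < exp 1 * A) by (pose proof (exp_pos 1); nra).
  assert (Hk5 : k * (1 - 5 * d) > 1).
  { unfold d. field_simplify; [|lra]. lra. }
  rewrite Hkk in Hk5.
  assert (exp 1 * A * (exp h * h) * (1 - 5 * d) <=
          exp 1 * A * ((1 - d) * X1 * X2 * X3 * (h - tau))).
  { rewrite Rmult_assoc. apply Rmult_le_compat_l; [lra|].
    pose proof (exp_pos h). nra. }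
  lra.
Qed.

Lemma cont_eps (f : R -> R) x : ex_derive f x ->
  forall eps, 0 < eps -> exists del, 0 < del /\ forall y, Rabs (y - x) < del -> Rabs (f y - f x) < eps.
Proof.
  intros Hd eps He.
  assert (Hc : continuity_pt f x).
  { apply continuity_pt_filterlim. apply (ex_derive_continuous (K:=R_AbsRing) (V:=R_NormedModule)). exact Hd. }
  destruct (Hc eps He) as [del [Hdel H]].
  exists del. split; auto. intros y Hy.
  destruct (Req_dec y x) as [->|Hne].
  - replace (f x - f x) with 0 by ring. rewrite Rabs_R0. lra.
  - apply H. split. split; [exact I|auto]. exact Hy.
Qed.

Lemma derive_loc_const (f : R -> R) (c S t : R) : S < t -> (forall s, S < s -> f s = c) ->
  Derive f t = 0.
Proof.
  intros Ht Hc. apply is_derive_unique.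
  apply (is_derive_ext_loc (fun _ => c)).
  - exists (mkposreal (t - S) ltac:(lra)). intros s Hs. simpl in Hs.
    rewrite ball_R in Hs. symmetry. apply Hc. apply Rabs_lt_between in Hs. lra.
  - apply isd_const.
Qed.

Lemma backward (g : R -> R) (h K eps : R) (x : R -> R) : 0 < h -> g K = K ->
  (exists del, 0 < del /\ forall w, 0 < Rabs w < del -> g (K + w) <> K) ->
  sp_solution g h eps x -> (exists t1, forall t, t1 <= t -> x t = K) -> forall t, x t = K.
Proof.
  intros Hh HgK [del [Hdel Hinj]] Hsol [t1 Ht1] t0.
  apply NNPP. intros Hne.
  set (E := fun u => forall t, - u <= t -> x t = K).
  assert (HE1 : E (- t1)) by (intros t Ht; apply Ht1; lra).
  assert (Hbd : bound E).
  { exists (- t0). intros u Hu. destruct (Rle_lt_dec u (- t0)); auto.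
    exfalso. apply Hne. apply Hu. lra. }
  destruct (completeness E Hbd (ex_intro _ _ HE1)) as [m [Hub Hleast]].
  set (S := - m).
  assert (C1 : forall t, S < t -> x t = K).
  { intros t Ht. apply NNPP. intros Hn.
    assert (is_upper_bound E (- t)).
    { intros u Hu. destruct (Rle_lt_dec u (- t)); auto. exfalso. apply Hn. apply Hu. lra. }
    pose proof (Hleast _ H). unfold S in Ht. lra. }
  assert (HdS : ex_derive x S) by apply (Hsol S).
  assert (C2 : x S = K).
  { apply NNPP. intros Hn.
    destruct (cont_eps x S HdS (Rabs (x S - K)) ltac:(apply Rabs_pos_lt; lra)) as [d1 [Hd1 H1]].
    specialize (H1 (S + d1/2)). rewrite C1 in H1 by lra.
    replace (K - x S) with (- (x S - K)) in H1 by ring. rewrite Rabs_Ropp in H1.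
    apply (Rlt_irrefl (Rabs (x S - K))). apply H1.
    replace (S + d1 / 2 - S) with (d1/2) by field. rewrite Rabs_right; lra. }
  assert (C3 : forall t, S < t -> g (x (t - h)) = K).
  { intros t Ht. destruct (Hsol t) as [_ [_ Heq]].
    assert (D1 : Derive x t = 0) by (apply (derive_loc_const x K S t Ht C1)).
    assert (D2 : Derive_n x 2 t = 0).
    { simpl. apply (derive_loc_const (Derive x) 0 S t Ht).
      intros s Hs. apply (derive_loc_const x K S s Hs C1). }
    rewrite D1, D2, C1 in Heq by lra. lra. }
  destruct (cont_eps x S HdS del Hdel) as [d1 [Hd1 H1]].
  set (d' := Rmin d1 h).
  assert (Hd' : 0 < d') by (unfold d'; apply Rmin_pos; lra).
  assert (C4 : forall s, S - d' < s <= S -> x s = K).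
  { intros s Hs. apply NNPP. intros Hn.
    assert (Hs1 : Rabs (s - S) < d1).
    { rewrite Rabs_left1 by lra. pose proof (Rmin_l d1 h). unfold d' in Hs. lra. }
    specialize (H1 s Hs1). rewrite C2 in H1.
    apply (Hinj (x s - K)). split; auto. apply Rabs_pos_lt. lra.
    replace (K + (x s - K)) with (x s) by ring.
    replace s with (s + h - h) by ring. apply C3.
    pose proof (Rmin_r d1 h). unfold d' in Hs. lra. }
  assert (E (m + d'/2)).
  { intros t Ht. destruct (Rle_lt_dec t S).
    - apply C4. unfold S in *. lra.
    - apply C1. auto. }
  pose proof (Hub _ H). lra.
Qed.

Lemma lim_eps (x : R -> R) K : is_lim x p_infty (Finite K) ->
  forall del, 0 < del -> exists M, forall t, M < t -> Rabs (x t - K) < del.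
Proof.
  intros H del Hd.
  destruct (H (ball K (mkposreal del Hd)) (locally_ball K _)) as [M HM].
  exists M. intros t Ht. apply HM. exact Ht.
Qed.

Lemma deriv_bound (g : R -> R) K a A' : is_derive g K a -> g K = K -> a < - A' ->
  exists del, 0 < del /\ forall w, Rabs w < del -> w * (g (K + w) - K) <= - A' * (w * w).
Proof.
  intros Hd HgK Ha. apply is_derive_Reals in Hd.
  destruct (Hd (- A' - a) ltac:(lra)) as [del Hdel].
  exists del. split. apply cond_pos. intros w Hw.
  destruct (Req_dec w 0) as [->|Hne]. { nra. }
  specialize (Hdel w Hne Hw). rewrite HgK in Hdel.
  apply Rabs_lt_between in Hdel.
  assert ((g (K + w) - K) / w < - A') by lra.
  assert (Hww : 0 < w * w).
  { destruct (Rle_lt_dec w 0). assert (w < 0) by (destruct r; auto; contradiction). nra. nra. }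
  replace (w * (g (K + w) - K)) with ((g (K + w) - K) / w * (w * w)) by (field; auto).
  apply Rmult_lt_compat_r with (r := w * w) in H; [|auto]. lra.
Qed.

Theorem lemma16 (g : R -> R) (h K : R) :
  hyp_H g h K ->
  (exists B, forall u, Rabs (g u) <= B) ->
  Derive g K * h * exp (h + 1) < -1 ->
  exists eps0, 0 < eps0 /\
    forall eps, 0 < eps < eps0 ->
    forall x : R -> R,
      sp_solution g h eps x ->
      (exists B, forall t, Rabs (x t) <= B) ->
      (exists t1 t2, x t1 <> x t2) ->
      is_lim x p_infty (Finite K) ->
      forall z, (exists t, z <= t /\ x t - K > 0) /\
                (exists t, z <= t /\ x t - K < 0).
Proof.
  intros HH _ Hcond.
  destruct HH as (Hh & HK & _ & Hfix & _ & _ & HC1 & _ & _ & _).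
  assert (HgK : g K = K) by (apply (Hfix K ltac:(lra)); right; reflexivity).
  set (a := Derive g K) in *.
  assert (Ha : a < 0).
  { destruct (Rlt_le_dec a 0); auto. pose proof (exp_pos (h + 1)).
    assert (0 <= a * h) by nra. nra. }
  set (A := - a).
  destruct (params A h ltac:(unfold A; lra) Hh ltac:(unfold A; nra)) as
    (r & tau & eps0 & Hr & Htau & He0 & Hpar).
  exists eps0. split; auto.
  intros eps Heps x Hsol [Bx HBx] Hnc Hlim z.
  assert (Hga : is_derive g K a) by (apply Derive_correct; apply HC1).
  destruct (deriv_bound g K a (r * A) Hga HgK ltac:(unfold A; nra)) as [del [Hdel Hgb]].
  assert (Hnz : forall t1, exists t, t1 <= t /\ x t <> K).
  { intros t1. apply NNPP. intros Hn.
    assert (Hall : forall t, x t = K).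
    { apply (backward g h K eps x Hh HgK).
      - exists del. split; auto. intros w [Hw1 Hw2] Heq.
        specialize (Hgb w Hw2). rewrite Heq in Hgb.
        assert (Hw0 : w <> 0) by (intro; subst; rewrite Rabs_R0 in Hw1; lra).
        assert (0 < w * w) by (destruct (Rle_lt_dec w 0) as [[|]|]; [nra|contradiction|nra]).
        assert (0 < r * A) by (unfold A; nra). replace (K - K) with 0 in Hgb by ring. nra.
      - exact Hsol.
      - exists t1. intros t Ht. apply NNPP. intros Hne. apply Hn. exists t. auto. }
    destruct Hnc as [t2 [t3 Hne]]. apply Hne. now rewrite !Hall. }
  destruct (lim_eps x K Hlim del Hdel) as [M HM].
  set (T := Rmax (z + h) (M + h + 1)).
  assert (HT1 : z + h <= T) by apply Rmax_l.
  assert (HT2 : M + h + 1 <= T) by apply Rmax_r.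
  set (e := eps ^ 2).
  assert (He : 0 < e) by (unfold e; simpl; nra).
  destruct (root_facts e He) as [R1 [R2 [R3 R4]]].
  specialize (Hpar eps Heps). fold e in Hpar.
  assert (Hd1 : forall t, is_derive x t (Derive x t)) by (intros t; apply Derive_correct, Hsol).
  assert (Hd2 : forall t, is_derive (Derive x) t (Derive (Derive x) t))
    by (intros t; apply Derive_correct, Hsol).
  assert (Heq : forall t, e * Derive (Derive x) t - Derive x t - x t + g (x (t - h)) = 0)
    by (intros t; apply Hsol).
  assert (Hsmall : forall t, T <= t -> Rabs (x (t - h) - K) < del) by (intros t Ht; apply HM; lra).
  split.
  - apply NNPP. intros Hn.
    assert (Hneg : forall t, z <= t -> x t - K <= 0).
    { intros t Ht. destruct (Rle_lt_dec (x t - K) 0); auto. exfalso. apply Hn. exists t. split; auto. }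
    apply (core e (lpf e) (lmf e) (r * A) h tau T (Bx + K) (fun t => K - x t)
             (fun t => - Derive x t) (fun t => - Derive (Derive x) t)); auto.
    + apply Rmult_lt_0_compat; unfold A; lra.
    + intros t.
      replace (- Derive x t) with (0 - Derive x t) by ring. apply (isd_minus (fun _ => K) x). apply isd_const. apply Hd1.
    + intros t. apply (isd_opp (Derive x)). apply Hd2.
    + intros t Ht. specialize (Hneg t ltac:(lra)). lra.
    + intros t Ht. specialize (Heq t). specialize (Hsmall t Ht).
      set (w := x (t - h) - K) in *.
      specialize (Hgb w Hsmall). replace (K + w) with (x (t - h)) in Hgb by (unfold w; ring).
      assert (w <= 0) by (unfold w; apply Hneg; lra).
      assert (Hgx : - (r * A) * w <= g (x (t - h)) - K).
      { destruct H; [|rewrite H; replace (x (t - h)) with K by (unfold w in H; lra); rewrite HgK; lra].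
        apply (Rmult_le_reg_l (- w)); [lra|]. nra. }
      replace (K - x (t - h)) with (- w) by (unfold w; ring). nra.
    + intros t. specialize (HBx t). apply Rabs_le_between in HBx. apply Rabs_le_between. lra.
    + intros t1. destruct (Hnz t1) as [t [Ht Hne]]. exists t. split; auto. lra.
  - apply NNPP. intros Hn.
    assert (Hpos : forall t, z <= t -> 0 <= x t - K).
    { intros t Ht. destruct (Rle_lt_dec 0 (x t - K)); auto. exfalso. apply Hn. exists t. split; auto. }
    apply (core e (lpf e) (lmf e) (r * A) h tau T (Bx + K) (fun t => x t - K)
             (fun t => Derive x t) (fun t => Derive (Derive x) t)); auto.
    + apply Rmult_lt_0_compat; unfold A; lra.
    + intros t. replace (Derive x t) with (Derive x t - 0) by ring.
      apply (isd_minus x (fun _ => K)). apply Hd1. apply isd_const.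
    + intros t Ht. specialize (Hpos t ltac:(lra)). lra.
    + intros t Ht. specialize (Heq t). specialize (Hsmall t Ht).
      set (w := x (t - h) - K) in *.
      specialize (Hgb w Hsmall). replace (K + w) with (x (t - h)) in Hgb by (unfold w; ring).
      assert (0 <= w) by (unfold w; apply Hpos; lra).
      assert (Hgx : g (x (t - h)) - K <= - (r * A) * w).
      { destruct H; [|rewrite <- H; replace (x (t - h)) with K by (unfold w in H; lra); rewrite HgK; lra].
        apply (Rmult_le_reg_l w); [lra|]. nra. }
      replace (x (t - h) - K) with w by (unfold w; ring). nra.
    + intros t. specialize (HBx t). apply Rabs_le_between in HBx. apply Rabs_le_between. lra.
    + intros t1. destruct (Hnz t1) as [t [Ht Hne]]. exists t. split; auto. lra.
Qed.
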